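(* Let $a>0$, $D>0$, $g>0$, $l_{\mathrm{c}}>0$, $c_{\infty}>0$ and $c_{\mathrm{s}}\ge 0$ be constants. A steady-state solution is a pair $(l_{\infty},c)$ with $l_{\infty}>0$ and $c\in C^2([0,l_{\infty}])$ satisfying \[ D c''(x)-a c'(x)-g c(x)=0\ (0<x<l_{\infty}),\qquad D c'(l_{\infty})=(a-gl_{\mathrm{c}})c_{\infty},\qquad c(l_{\infty})=c_{\infty},\qquad c(0)=c_{\mathrm{s}}. \] Set $R=\sqrt{a^2+4gD}$, $\lambda_{\pm}=(a\pm R)/(2D)$, \[ f(z)=\frac{1}{R}\left[\mathrm{e}^{-\lambda_+ z}\left(\frac{R+a}{2}-gl_{\mathrm{c}}\right)+\mathrm{e}^{-\lambda_- z}\left(\frac{R-a}{2}+gl_{\mathrm{c}}\right)\right], \] and, for a given $l_{\infty}>0$, \[ c(x)=\frac{c_{\infty}}{R}\left[\left(\frac{R+a}{2}-gl_{\mathrm{c}}\right)\mathrm{e}^{\lambda_+(x-l_{\infty})}+\left(\frac{R-a}{2}+gl_{\mathrm{c}}\right)\mathrm{e}^{\lambda_-(x-l_{\infty})}\right],\quad 0\le x\le l_{\infty}.\qquad(\ast) \] Then: (I) If $gl_{\mathrm{c}}<a$, then \[ z_0=\frac{D}{R}\log\frac{(R+a)(R+a-2gl_{\mathrm{c}})}{(R-a)(R-a+2gl_{\mathrm{c}})} \] satisfies $z_0>0$, and (i) if $c_{\mathrm{s}}/c_{\infty}<f(z_0)<1$, no steady-state solution exists; (ii) if $c_{\mathrm{s}}/c_{\infty}=f(z_0)$,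 there is a unique steady-state solution; it has $l_{\infty}=z_0$ and $c$ given by $(\ast)$, which is an increasing function; (iii) if $f(z_0)<c_{\mathrm{s}}/c_{\infty}<1$, there exist exactly two steady-state solutions $(l_{\infty 1},c_1)$, $(l_{\infty 2},c_2)$ with $0<l_{\infty 1}<z_0<l_{\infty 2}$, where $c_i$ is given by $(\ast)$ with $l_{\infty}=l_{\infty i}$; $c_1$ is increasing on $[0,l_{\infty 1}]$, and $c_2$ is decreasing on $[0,l_{\infty 2}-z_0]$ and increasing on $[l_{\infty 2}-z_0,l_{\infty 2}]$; (iv) if $c_{\mathrm{s}}/c_{\infty}\ge 1$, there is a unique steady-state solution; it has $l_{\infty}>z_0$, and $c$ given by $(\ast)$ is decreasing on $(0,l_{\infty}-z_0]$ and increasing on $[l_{\infty}-z_0,l_{\infty}]$. (II) If $gl_{\mathrm{c}}\ge a$, then there exists a steady-state solution if and only if $c_{\mathrm{s}}>c_{\infty}$; in that case the equation $f(l_{\infty})=c_{\mathrm{s}}/c_{\infty}$ has a unique solution $l_{\infty}>0$, the steady-state solution is unique, given by this $l_{\infty}$ and $(\ast)$, and $c$ is a decreasing function.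
   Context: This is the steady-state problem of a one-dimensional model of axonal growth: $c(x)$ is the tubulin concentration along an axon of length $l_{\infty}$, $a$ is the active transport velocity, $D$ the diffusion coefficient, $g$ the degradation rate, $l_{\mathrm{c}}$ the characteristic length of the growth cone, $c_{\infty}$ the steady-state growth cone concentration, and $c_{\mathrm{s}}$ the (constant) soma concentration. In every case, a steady-state length $l_{\infty}>0$ together with $c$ is a steady-state solution exactly when $f(l_{\infty})=c_{\mathrm{s}}/c_{\infty}$ and $c$ is given by $(\ast)$. *)

(* Defs.v *)
From Stdlib Require Import Reals.
From Coquelicot Require Import Coquelicot.
Open Scope R_scope.

(* [derive_within f lo hi x d]: d is the derivative of f at x relative to
   [lo,hi] (one-sided at the endpoints). *)
Definition derive_within (f : R -> R) (lo hi x d : R) : Prop :=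
  filterlim (fun y => (f y - f x) / (y - x))
    (within (fun y => lo <= y <= hi /\ y <> x) (locally x)) (locally d).

Definition continuous_within (f : R -> R) (lo hi x : R) : Prop :=
  filterlim f (within (fun y => lo <= y <= hi) (locally x)) (locally (f x)).

Definition C2_on (c c1 c2 : R -> R) (lo hi : R) : Prop :=
  forall x, lo <= x <= hi ->
    derive_within c lo hi x (c1 x) /\ derive_within c1 lo hi x (c2 x) /\
    continuous_within c2 lo hi x.

Definition steady_state (a D g lc cinf cs : R) (l : R) (c : R -> R) : Prop :=
  0 < l /\
  exists c1 c2 : R -> R,
    C2_on c c1 c2 0 l /\
    (forall x, 0 < x < l -> D * c2 x - a * c1 x - g * c x = 0) /\
    D * c1 l = (a - g * lc) * cinf /\
    c l = cinf /\
    c 0 = cs.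

Definition Rr (a D g : R) : R := sqrt (a ^ 2 + 4 * g * D).
Definition lam_p (a D g : R) : R := (a + Rr a D g) / (2 * D).
Definition lam_m (a D g : R) : R := (a - Rr a D g) / (2 * D).

Definition f_ss (a D g lc : R) (z : R) : R :=
  / Rr a D g *
  (exp (- lam_p a D g * z) * ((Rr a D g + a) / 2 - g * lc) +
   exp (- lam_m a D g * z) * ((Rr a D g - a) / 2 + g * lc)).

Definition c_star (a D g lc cinf l : R) (x : R) : R :=
  cinf / Rr a D g *
  (((Rr a D g + a) / 2 - g * lc) * exp (lam_p a D g * (x - l)) +
   ((Rr a D g - a) / 2 + g * lc) * exp (lam_m a D g * (x - l))).

Definition z0 (a D g lc : R) : R :=
  D / Rr a D g *
  ln (((Rr a D g + a) * (Rr a D g + a - 2 * g * lc)) /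
      ((Rr a D g - a) * (Rr a D g - a + 2 * g * lc))).

Definition incr_on (h : R -> R) (P : R -> Prop) : Prop :=
  forall x y, P x -> P y -> x < y -> h x < h y.
Definition decr_on (h : R -> R) (P : R -> Prop) : Prop :=
  forall x y, P x -> P y -> x < y -> h y < h x.

Definition same_sol (a D g lc cinf l' l : R) (c : R -> R) : Prop :=
  l = l' /\ forall x, 0 <= x <= l -> c x = c_star a D g lc cinf l' x.

(* Main.v *)
Require Import Defs.
From Stdlib Require Import Reals Lra Psatz.
From Coquelicot Require Import Coquelicot.
Open Scope R_scope.

Lemma ballR (x e y : R) : ball x e y <-> Rabs (y - x) < e.
Proof. reflexivity. Qed.

Lemma locR (x : R) (P : R -> Prop) :
  locally x P <-> exists d : R, 0 < d /\ forall y, Rabs (y - x) < d -> P y.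
Proof.
split.
- intros [[d hd] H]. exists d; split; [exact hd|]. intros y hy; apply H; exact hy.
- intros [d [hd H]]. exists (mkposreal d hd). intros y hy. apply H; exact hy.
Qed.

Lemma dw_eps f lo hi x d : derive_within f lo hi x d ->
  forall eps, 0 < eps -> exists del, 0 < del /\ forall y, lo <= y <= hi -> y <> x ->
   Rabs (y - x) < del -> Rabs ((f y - f x) / (y - x) - d) < eps.
Proof.
intros H eps he. unfold derive_within in H.
apply (proj1 (filterlim_locally _ _)) with (eps := mkposreal eps he) in H.
unfold within in H. apply locR in H. destruct H as [del [hd H]].
exists del; split; auto. intros y hy hyx hyd. apply (H y hyd). split; auto.
Qed.

Lemma cw_eps f lo hi x : continuous_within f lo hi x ->
  forall eps, 0 < eps -> exists del, 0 < del /\ forall y, lo <= y <= hi ->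
   Rabs (y - x) < del -> Rabs (f y - f x) < eps.
Proof.
intros H eps he. unfold continuous_within in H.
apply (proj1 (filterlim_locally _ _)) with (eps := mkposreal eps he) in H.
unfold within in H. apply locR in H. destruct H as [del [hd H]].
exists del; split; auto. intros y hy hyd. apply (H y hyd). auto.
Qed.

Lemma eps_cw f lo hi x : (forall eps, 0 < eps -> exists del, 0 < del /\ forall y, lo <= y <= hi ->
   Rabs (y - x) < del -> Rabs (f y - f x) < eps) -> continuous_within f lo hi x.
Proof.
intros H. unfold continuous_within. apply filterlim_locally. intros [eps he].
destruct (H eps he) as [del [hd H2]]. unfold within. apply locR. exists del; split; auto.
intros y hy hy2. apply H2; auto.
Qed.

Lemma eps_dw f lo hi x d : (forall eps, 0 < eps -> exists del, 0 < del /\ forall y, lo <= y <= hi -> y <> x ->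
   Rabs (y - x) < del -> Rabs ((f y - f x) / (y - x) - d) < eps) -> derive_within f lo hi x d.
Proof.
intros H. unfold derive_within. apply filterlim_locally. intros [eps he].
destruct (H eps he) as [del [hd H2]]. unfold within. apply locR. exists del; split; auto.
intros y hy [hy2 hy3]. apply H2; auto.
Qed.

Lemma dpl_dw f lo hi x d : derivable_pt_lim f x d -> derive_within f lo hi x d.
Proof.
intros H. apply eps_dw. intros eps he. destruct (H eps he) as [[del hd] H2].
exists del; split; auto. intros y _ hyx hyd.
assert (hh : y - x <> 0) by lra.
specialize (H2 (y - x) hh hyd). replace (x + (y - x)) with y in H2 by ring. exact H2.
Qed.

Lemma cpt_cw f lo hi x : continuity_pt f x -> continuous_within f lo hi x.
Proof.
intros H. apply eps_cw. intros eps he. destruct (H eps he) as [del [hd H2]].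
exists del; split; auto. intros y _ hy.
destruct (Req_dec y x) as [->|hne]. rewrite Rminus_diag, Rabs_R0; auto.
apply (H2 y). split. split; [exact I| auto]. exact hy.
Qed.

Lemma dpl_cpt f x d : derivable_pt_lim f x d -> continuity_pt f x.
Proof. intros H. apply derivable_continuous_pt. exists d. exact H. Qed.

Lemma dw_dpl f lo hi x d : lo < x < hi -> derive_within f lo hi x d -> derivable_pt_lim f x d.
Proof.
intros hx H eps he. destruct (dw_eps _ _ _ _ _ H eps he) as [del [hd H2]].
assert (hm : 0 < Rmin del (Rmin (x - lo) (hi - x))).
{ apply Rmin_pos; auto. apply Rmin_pos; lra. }
exists (mkposreal _ hm). intros h hh hhd. simpl in hhd.
pose proof (Rmin_l del (Rmin (x - lo) (hi - x))).
pose proof (Rmin_r del (Rmin (x - lo) (hi - x))).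
pose proof (Rmin_l (x - lo) (hi - x)). pose proof (Rmin_r (x - lo) (hi - x)).
assert (Rabs h < x - lo /\ Rabs h < hi - x) by lra.
pose proof (Rabs_le_between' h h (Rabs h)).
assert (-Rabs h <= h <= Rabs h) by (split; [apply Ropp_le_cancel; rewrite Ropp_involutive; rewrite <- Rabs_Ropp; apply Rle_abs| apply Rle_abs]).
specialize (H2 (x + h)). replace (x + h - x) with h in H2 by ring.
apply H2; [lra | lra | lra].
Qed.

Lemma dw_cw f lo hi x d : derive_within f lo hi x d -> continuous_within f lo hi x.
Proof.
intros H. apply eps_cw. intros eps he.
destruct (dw_eps _ _ _ _ _ H 1 Rlt_0_1) as [del [hd H2]].
assert (hk : 0 < Rabs d + 1) by (pose proof (Rabs_pos d); lra).
assert (hm : 0 < Rmin del (eps / (Rabs d + 1))).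
{ apply Rmin_pos; auto. apply Rdiv_lt_0_compat; auto. }
exists (Rmin del (eps / (Rabs d + 1))); split; auto.
intros y hy hyd.
pose proof (Rmin_l del (eps / (Rabs d + 1))). pose proof (Rmin_r del (eps / (Rabs d + 1))).
destruct (Req_dec y x) as [->|hne]. rewrite Rminus_diag, Rabs_R0; auto.
assert (hq := H2 y hy hne ltac:(lra)).
assert (e1 : f y - f x = ((f y - f x) / (y - x)) * (y - x)) by (field; lra).
rewrite e1, Rabs_mult.
assert (Rabs ((f y - f x) / (y - x)) <= Rabs d + 1).
{ pose proof (Rabs_triang_inv ((f y - f x) / (y - x)) d). lra. }
apply Rle_lt_trans with ((Rabs d + 1) * Rabs (y - x)).
apply Rmult_le_compat_r; auto. apply Rabs_pos.
assert (Rabs (y - x) < eps / (Rabs d + 1)) by lra.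
apply Rmult_lt_compat_l with (r := Rabs d + 1) in H4; auto.
replace ((Rabs d + 1) * (eps / (Rabs d + 1))) with eps in H4 by (field; lra). exact H4.
Qed.

Lemma zero_lemma h h' k l : 0 < l ->
  (forall x, 0 < x < l -> derivable_pt_lim h x (h' x)) ->
  (forall x, 0 < x < l -> h' x = k * h x) ->
  continuous_within h 0 l l -> continuous_within h 0 l 0 -> h l = 0 ->
  forall x, 0 <= x <= l -> h x = 0.
Proof.
intros hl hd hk cl c0 hl0.
set (phi := fun x => h x * exp (- k * x)).
assert (dphi : forall x, 0 < x < l -> derivable_pt_lim phi x 0).
{ intros x hx.
  assert (He : is_derive (fun x => exp (- k * x)) x (exp (- k * x) * (- k))).
  { auto_derive; auto; ring. }
  apply is_derive_Reals in He.
  replace 0 with (h' x * exp (- k * x) + h x * (exp (- k * x) * - k)).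
  2:{ rewrite (hk x hx). ring. }
  exact (derivable_pt_lim_mult _ _ _ _ _ (hd x hx) He). }
assert (const : forall x y, 0 < x < l -> 0 < y < l -> x < y -> phi x = phi y).
{ intros x y hx hy hxy.
  destruct (MVT_cor2 phi (fun _ => 0) x y hxy) as [c [Hc _]].
  intros c hc. apply dphi. lra. lra. }
assert (constall : forall x, 0 < x < l -> phi x = phi (l/2)).
{ intros x hx. destruct (Rtotal_order x (l/2)) as [H|[H|H]].
  apply const; lra. subst; reflexivity. symmetry; apply const; lra. }
set (C := phi (l/2)).
assert (hform : forall y, 0 < y < l -> h y = C * exp (k * y)).
{ intros y hy. unfold C; rewrite <- (constall y hy). unfold phi.
  rewrite Rmult_assoc, <- exp_plus. replace (-k*y + k*y) with 0 by ring. rewrite exp_0; ring. }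
assert (hC : C = 0).
{ destruct (Req_dec C 0) as [|hC]; auto. exfalso.
  set (eps := Rabs C * exp (- Rabs k * l)).
  assert (he : 0 < eps). { unfold eps. apply Rmult_lt_0_compat. apply Rabs_pos_lt; auto. apply exp_pos. }
  destruct (cw_eps _ _ _ _ cl eps he) as [del [hdel H]].
  set (y := l - Rmin del l / 2).
  assert (hm1 := Rmin_l del l). assert (hm2 := Rmin_r del l).
  assert (hm3 : 0 < Rmin del l) by (apply Rmin_pos; auto).
  assert (hy : 0 < y < l) by (unfold y; lra).
  assert (Rabs (y - l) < del). { unfold y. replace (l - Rmin del l / 2 - l) with (- (Rmin del l / 2)) by ring. rewrite Rabs_Ropp, Rabs_right; lra. }
  specialize (H y ltac:(lra) H0). rewrite hl0, Rminus_0_r, hform in H by auto.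
  rewrite Rabs_mult, (Rabs_right (exp _)) in H by (left; apply exp_pos).
  assert (exp (- Rabs k * l) <= exp (k * y)).
  { destruct (Rle_lt_or_eq_dec _ _ (Rabs_pos k)) as [hk0|hk0].
    left; apply exp_increasing.
    pose proof (Rle_abs (-k)). rewrite Rabs_Ropp in H1. nra.
    rewrite <- hk0. assert (k = 0). { destruct (Req_dec k 0); auto. exfalso. apply Rabs_no_R0 in H1; lra. }
    subst k; right; f_equal; ring. }
  unfold eps in H. apply Rmult_lt_reg_l in H. lra. apply Rabs_pos_lt; auto. }
intros x hx.
destruct (Rle_lt_or_eq_dec _ _ (proj1 hx)) as [h0|h0].
destruct (Rle_lt_or_eq_dec _ _ (proj2 hx)) as [h1|h1].
rewrite hform by lra. rewrite hC; ring.
subst; auto.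
subst x. destruct (Req_dec (h 0) 0) as [|hne]; auto. exfalso.
destruct (cw_eps _ _ _ _ c0 (Rabs (h 0)) (Rabs_pos_lt _ hne)) as [del [hdel H]].
set (y := Rmin del l / 2).
assert (hm1 := Rmin_l del l). assert (hm2 := Rmin_r del l).
assert (hm3 : 0 < Rmin del l) by (apply Rmin_pos; auto).
assert (hy : 0 < y < l) by (unfold y; lra).
specialize (H y ltac:(lra)). rewrite Rminus_0_r, Rabs_right in H by lra.
rewrite hform, hC, Rmult_0_l, Rminus_0_l, Rabs_Ropp in H by auto. specialize (H ltac:(unfold y; lra)). lra.
Qed.

Section S.
Variables (a D g lc : R).
Hypotheses (ha : 0 < a) (hD : 0 < D) (hg : 0 < g) (hlc : 0 < lc).

Lemma Rr_sq : Rr a D g * Rr a D g = a ^ 2 + 4 * g * D.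
Proof. unfold Rr. apply sqrt_sqrt. nra. Qed.

Lemma Rr_gt : a < Rr a D g.
Proof. pose proof Rr_sq. assert (0 <= Rr a D g) by (unfold Rr; apply sqrt_pos). nra. Qed.

Lemma lp_pos : 0 < lam_p a D g.
Proof. pose proof Rr_gt. unfold lam_p. apply Rdiv_lt_0_compat; lra. Qed.

Lemma lm_neg : lam_m a D g < 0.
Proof. pose proof Rr_gt. unfold lam_m. apply Rdiv_neg_pos; lra. Qed.

Lemma lsum : lam_p a D g + lam_m a D g = a / D.
Proof. unfold lam_p, lam_m. field. lra. Qed.

Lemma lprod : lam_p a D g * lam_m a D g = - g / D.
Proof. pose proof Rr_sq. unfold lam_p, lam_m.
 replace ((a + Rr a D g) / (2 * D) * ((a - Rr a D g) / (2 * D))) with ((a * a - Rr a D g * Rr a D g) / (4 * D * D)) by (field; lra).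
 rewrite H. field. lra. Qed.

Lemma char_p : D * lam_p a D g ^ 2 - a * lam_p a D g - g = 0.
Proof. pose proof Rr_sq. unfold lam_p.
 replace (D * ((a + Rr a D g) / (2 * D)) ^ 2 - a * ((a + Rr a D g) / (2 * D)) - g) with ((Rr a D g * Rr a D g - a * a - 4 * g * D) / (4 * D)) by (field; lra).
 rewrite H. field. lra. Qed.

Lemma char_m : D * lam_m a D g ^ 2 - a * lam_m a D g - g = 0.
Proof. pose proof Rr_sq. unfold lam_m.
 replace (D * ((a - Rr a D g) / (2 * D)) ^ 2 - a * ((a - Rr a D g) / (2 * D)) - g) with ((Rr a D g * Rr a D g - a * a - 4 * g * D) / (4 * D)) by (field; lra).
 rewrite H. field. lra. Qed.

Definition AA := (Rr a D g + a) / 2 - g * lc.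
Definition BB := (Rr a D g - a) / 2 + g * lc.

Lemma BB_pos : 0 < BB.
Proof. pose proof Rr_gt. unfold BB. nra. Qed.

Lemma AB_sum : AA + BB = Rr a D g.
Proof. unfold AA, BB. field. Qed.

Lemma AB_lin : AA * lam_p a D g + BB * lam_m a D g = Rr a D g * (a - g * lc) / D.
Proof. unfold AA, BB, lam_p, lam_m. field. lra. Qed.

Lemma f_eq z : f_ss a D g lc z = / Rr a D g * (AA * exp (- lam_p a D g * z) + BB * exp (- lam_m a D g * z)).
Proof. unfold f_ss, AA, BB. ring. Qed.

Lemma f_0 : f_ss a D g lc 0 = 1.
Proof. rewrite f_eq. rewrite !Rmult_0_r, exp_0. pose proof Rr_gt. rewrite <- AB_sum. field.
 rewrite AB_sum; lra. Qed.

Definition df z := / Rr a D g * (AA * (- lam_p a D g) * exp (- lam_p a D g * z) + BB * (- lam_m a D g) * exp (- lam_m a D g * z)).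

Lemma f_der z : derivable_pt_lim (f_ss a D g lc) z (df z).
Proof.
apply is_derive_Reals. eapply is_derive_ext. intros t; symmetry; apply f_eq.
unfold df. auto_derive; auto. ring.
Qed.

Lemma f_cont z : continuity_pt (f_ss a D g lc) z.
Proof. exact (dpl_cpt _ _ _ (f_der z)). Qed.

Lemma cst_eq cinf l x : c_star a D g lc cinf l x = cinf * f_ss a D g lc (l - x).
Proof. unfold c_star, f_ss.
 replace (- lam_p a D g * (l - x)) with (lam_p a D g * (x - l)) by ring.
 replace (- lam_m a D g * (l - x)) with (lam_m a D g * (x - l)) by ring.
 unfold Rdiv. ring. Qed.

Definition c1s cinf l x := cinf / Rr a D g * (AA * lam_p a D g * exp (lam_p a D g * (x - l)) + BB * lam_m a D g * exp (lam_m a D g * (x - l))).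
Definition c2s cinf l x := cinf / Rr a D g * (AA * lam_p a D g ^ 2 * exp (lam_p a D g * (x - l)) + BB * lam_m a D g ^ 2 * exp (lam_m a D g * (x - l))).

Lemma cst_der cinf l x : derivable_pt_lim (c_star a D g lc cinf l) x (c1s cinf l x).
Proof. apply is_derive_Reals. unfold c_star, c1s, AA, BB. auto_derive; auto. unfold Rminus; ring. Qed.
Lemma c1s_der cinf l x : derivable_pt_lim (c1s cinf l) x (c2s cinf l x).
Proof. apply is_derive_Reals. unfold c2s, c1s. auto_derive; auto. unfold Rminus; ring. Qed.
Lemma c2s_der cinf l x : derivable_pt_lim (c2s cinf l) x (c2s cinf l x * 0 + 0).
Abort.
Lemma c2s_cont cinf l x : continuity_pt (c2s cinf l) x.
Proof. apply (dpl_cpt _ _ (cinf / Rr a D g * (AA * lam_p a D g ^ 2 * (exp (lam_p a D g * (x - l)) * lam_p a D g) + BB * lam_m a D g ^ 2 * (exp (lam_m a D g * (x - l)) * lam_m a D g)))).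
 apply is_derive_Reals. unfold c2s. auto_derive; auto. unfold Rminus; ring. Qed.

Lemma cst_ode cinf l x : D * c2s cinf l x - a * c1s cinf l x - g * c_star a D g lc cinf l x = 0.
Proof.
unfold c2s, c1s, c_star. fold AA BB. pose proof char_p. pose proof char_m.
set (ep := exp (lam_p a D g * (x - l))). set (em := exp (lam_m a D g * (x - l))).
replace (D * (cinf / Rr a D g * (AA * lam_p a D g ^ 2 * ep + BB * lam_m a D g ^ 2 * em)) -
 a * (cinf / Rr a D g * (AA * lam_p a D g * ep + BB * lam_m a D g * em)) -
 g * (cinf / Rr a D g * (AA * ep + BB * em))) with
 (cinf / Rr a D g * (AA * ep * (D * lam_p a D g ^ 2 - a * lam_p a D g - g) + BB * em * (D * lam_m a D g ^ 2 - a * lam_m a D g - g))) by ring.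
rewrite H, H0. ring.
Qed.

Lemma cst_l cinf l : c_star a D g lc cinf l l = cinf.
Proof. rewrite cst_eq, Rminus_diag, f_0. ring. Qed.

Lemma c1s_l cinf l : D * c1s cinf l l = (a - g * lc) * cinf.
Proof. unfold c1s. rewrite Rminus_diag, !Rmult_0_r, exp_0.
 pose proof AB_lin. pose proof Rr_gt.
 replace (D * (cinf / Rr a D g * (AA * lam_p a D g * 1 + BB * lam_m a D g * 1))) with
  (D * cinf / Rr a D g * (AA * lam_p a D g + BB * lam_m a D g)) by (field; lra).
 rewrite H. field. lra. Qed.

End S.

Lemma cw_lin u v p q lo hi x : continuous_within u lo hi x -> continuous_within v lo hi x ->
  continuous_within (fun y => p * u y + q * v y) lo hi x.
Proof.
intros Hu Hv. apply eps_cw. intros eps he.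
assert (hp : 0 < 2 * (Rabs p + 1)) by (pose proof (Rabs_pos p); lra).
assert (hq : 0 < 2 * (Rabs q + 1)) by (pose proof (Rabs_pos q); lra).
destruct (cw_eps _ _ _ _ Hu (eps / (2 * (Rabs p + 1)))) as [d1 [hd1 H1]].
apply Rdiv_lt_0_compat; auto.
destruct (cw_eps _ _ _ _ Hv (eps / (2 * (Rabs q + 1)))) as [d2 [hd2 H2]].
apply Rdiv_lt_0_compat; auto.
exists (Rmin d1 d2); split. apply Rmin_pos; auto.
intros y hy hyd. pose proof (Rmin_l d1 d2). pose proof (Rmin_r d1 d2).
specialize (H1 y hy ltac:(lra)). specialize (H2 y hy ltac:(lra)).
replace (p * u y + q * v y - (p * u x + q * v x)) with (p * (u y - u x) + q * (v y - v x)) by ring.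
eapply Rle_lt_trans. apply Rabs_triang. rewrite !Rabs_mult.
assert (Rabs p * Rabs (u y - u x) <= (Rabs p + 1) * Rabs (u y - u x)).
{ apply Rmult_le_compat_r; [apply Rabs_pos| lra]. }
assert ((Rabs p + 1) * Rabs (u y - u x) < (Rabs p + 1) * (eps / (2 * (Rabs p + 1)))).
{ apply Rmult_lt_compat_l; lra. }
assert (Rabs q * Rabs (v y - v x) <= (Rabs q + 1) * Rabs (v y - v x)).
{ apply Rmult_le_compat_r; [apply Rabs_pos| lra]. }
assert ((Rabs q + 1) * Rabs (v y - v x) < (Rabs q + 1) * (eps / (2 * (Rabs q + 1)))).
{ apply Rmult_lt_compat_l; lra. }
replace ((Rabs p + 1) * (eps / (2 * (Rabs p + 1)))) with (eps / 2) in H4 by (field; lra).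
replace ((Rabs q + 1) * (eps / (2 * (Rabs q + 1)))) with (eps / 2) in H6 by (field; lra).
lra.
Qed.

Lemma cw_ext u v lo hi x : (forall y, u y = v y) -> continuous_within u lo hi x -> continuous_within v lo hi x.
Proof. intros E H. apply eps_cw. intros eps he. destruct (cw_eps _ _ _ _ H eps he) as [d [hd H2]].
exists d; split; auto. intros y hy hyd. rewrite <- !E. auto. Qed.

Section S.
Variables (a D g lc cinf cs : R).
Hypotheses (ha : 0 < a) (hD : 0 < D) (hg : 0 < g) (hlc : 0 < lc) (hcinf : 0 < cinf).

Lemma ss_exist l : 0 < l -> f_ss a D g lc l = cs / cinf ->
  steady_state a D g lc cinf cs l (c_star a D g lc cinf l).
Proof.
intros hl hf. split; auto. exists (c1s a D g lc cinf l), (c2s a D g lc cinf l).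
split; [|split; [|split; [|split]]].
- intros x hx. split; [|split].
  + apply dpl_dw, cst_der.
  + apply dpl_dw, c1s_der.
  + apply cpt_cw, c2s_cont.
- intros x hx. apply cst_ode; auto.
- apply c1s_l; auto.
- apply cst_l; auto.
- rewrite cst_eq, Rminus_0_r, hf. field. lra.
Qed.

Lemma ss_uniq l c : steady_state a D g lc cinf cs l c ->
  0 < l /\ f_ss a D g lc l = cs / cinf /\ forall x, 0 <= x <= l -> c x = c_star a D g lc cinf l x.
Proof.
intros [hl [c1 [c2 [HC2 [Hode [Hc1l [Hcl Hc0]]]]]]].
set (cst := c_star a D g lc cinf l). set (d1 := c1s a D g lc cinf l). set (d2 := c2s a D g lc cinf l).
set (lp := lam_p a D g). set (lm := lam_m a D g).
set (e := fun x => 1 * c x + (-1) * cst x).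
set (e1 := fun x => 1 * c1 x + (-1) * d1 x).
set (e2 := fun x => c2 x - d2 x).
assert (de : forall x, 0 < x < l -> derivable_pt_lim e x (e1 x)).
{ intros x hx. unfold e, e1.
  apply derivable_pt_lim_plus; apply derivable_pt_lim_scal.
  destruct (HC2 x ltac:(lra)) as [H _]. eapply dw_dpl; eauto.
  apply cst_der. }
assert (de1 : forall x, 0 < x < l -> derivable_pt_lim e1 x (e2 x)).
{ intros x hx. unfold e1, e2.
  replace (c2 x - d2 x) with (1 * c2 x + (-1) * d2 x) by ring.
  apply derivable_pt_lim_plus; apply derivable_pt_lim_scal.
  destruct (HC2 x ltac:(lra)) as [_ [H _]]. eapply dw_dpl; eauto.
  apply c1s_der. }
assert (ode : forall x, 0 < x < l -> D * e2 x - a * e1 x - g * e x = 0).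
{ intros x hx. unfold e, e1, e2. pose proof (Hode x hx). pose proof (cst_ode a D g lc hD hg cinf l x).
  fold cst d1 d2 in H0. lra. }
assert (cwe : forall p, 0 <= p <= l -> continuous_within e 0 l p).
{ intros p hp. apply cw_lin. destruct (HC2 p hp) as [H _]. eapply dw_cw; eauto.
  apply cpt_cw. eapply dpl_cpt. apply cst_der. }
assert (cwe1 : forall p, 0 <= p <= l -> continuous_within e1 0 l p).
{ intros p hp. apply cw_lin. destruct (HC2 p hp) as [_ [H _]]. eapply dw_cw; eauto.
  apply cpt_cw. eapply dpl_cpt. apply c1s_der. }
assert (el : e l = 0). { unfold e. rewrite Hcl. unfold cst. rewrite cst_l; auto. ring. }
assert (e1l : e1 l = 0). { unfold e1. pose proof (c1s_l a D g lc ha hD hg cinf l). fold d1 in H.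
  assert (c1 l = d1 l). { apply Rmult_eq_reg_l with D; lra. } rewrite H0; ring. }
set (w := fun x => 1 * e1 x + (- lm) * e x).
assert (w0 : forall x, 0 <= x <= l -> w x = 0).
{ apply (zero_lemma w (fun x => 1 * e2 x + (- lm) * e1 x) lp l hl).
  - intros x hx. unfold w. apply derivable_pt_lim_plus; apply derivable_pt_lim_scal; auto.
  - intros x hx. unfold w. pose proof (ode x hx). pose proof (lsum a D g hD). pose proof (lprod a D g hD hg).
    fold lp lm in H0, H1.
    assert (Hs : D * lp + D * lm = a). { replace (D * lp + D * lm) with (D * (lp + lm)) by ring. rewrite H0. field. lra. }
    assert (Hp : D * lp * lm = - g). { replace (D * lp * lm) with (D * (lp * lm)) by ring. rewrite H1. field. lra. }
    assert (E : D * e2 x = (D*lp + D*lm) * e1 x + (- (D*lp*lm)) * e x). { rewrite Hs, Hp. lra. }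
    apply Rmult_eq_reg_l with D; [|lra].
    replace (D * (1 * e2 x + - lm * e1 x)) with (D * e2 x - D * lm * e1 x) by ring.
    rewrite E. ring.
  - unfold w; apply cw_lin; [apply cwe1 | apply cwe]; lra.
  - unfold w; apply cw_lin; [apply cwe1 | apply cwe]; lra.
  - unfold w. rewrite el, e1l. ring. }
assert (e0 : forall x, 0 <= x <= l -> e x = 0).
{ apply (zero_lemma e e1 lm l hl); auto.
  - intros x hx. pose proof (w0 x ltac:(lra)). unfold w in H. lra.
  - apply cwe; lra.
  - apply cwe; lra. }
assert (ceq : forall x, 0 <= x <= l -> c x = cst x).
{ intros x hx. pose proof (e0 x hx). unfold e in H. lra. }
split; auto. split; auto.
pose proof (ceq 0 ltac:(lra)). rewrite Hc0 in H. unfold cst in H. rewrite cst_eq, Rminus_0_r in H.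
rewrite H. field. lra.
Qed.

End S.

Section S.
Variables (a D g lc : R).
Hypotheses (ha : 0 < a) (hD : 0 < D) (hg : 0 < g) (hlc : 0 < lc).

Let R0 := Rr a D g.
Let lp := lam_p a D g.
Let lm := lam_m a D g.
Let A := AA a D g lc.
Let B := BB a D g lc.
Let f := f_ss a D g lc.

Lemma Rpos : 0 < R0. Proof. pose proof (Rr_gt a D g ha hD hg). unfold R0; lra. Qed.

Lemma ldiff : lp - lm = R0 / D.
Proof. unfold lp, lm, lam_p, lam_m, R0. field. lra. Qed.

Lemma df_form z : df a D g lc z = / R0 * exp (- lp * z) * (- (A * lp) + B * (- lm) * exp ((R0 / D) * z)).
Proof.
unfold df. rewrite <- ldiff. fold R0 lp lm A B.
replace (exp (- lm * z)) with (exp (- lp * z) * exp ((lp - lm) * z)).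
ring. rewrite <- exp_plus. f_equal; ring.
Qed.

Lemma ratio_eq : ((R0 + a) * (R0 + a - 2 * g * lc)) / ((R0 - a) * (R0 - a + 2 * g * lc)) = (A * lp) / (B * (- lm)).
Proof.
pose proof (Rr_gt a D g ha hD hg). fold R0 in H. pose proof (BB_pos a D g lc ha hD hg hlc).
unfold A, B, lp, lm, R0, AA, BB, lam_p, lam_m in *. field. split; [|split]; try lra.
Qed.

Lemma f_form z : f z = / R0 * (A * exp (- lp * z) + B * exp (- lm * z)).
Proof. unfold f. rewrite f_eq. reflexivity. Qed.

Section I.
Hypothesis hI : g * lc < a.

Lemma A_pos : 0 < A.
Proof. pose proof (Rr_gt a D g ha hD hg). unfold A, AA, R0 in *. lra. Qed.

Let rho := (A * lp) / (B * (- lm)).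

Lemma rho_gt1 : 1 < rho.
Proof.
pose proof A_pos. pose proof (BB_pos a D g lc ha hD hg hlc). fold B in H0.
pose proof (lp_pos a D g ha hD hg). pose proof (lm_neg a D g ha hD hg). fold lp lm in H1, H2.
pose proof (AB_lin a D g lc hD). fold A B lp lm R0 in H3. pose proof Rpos.
assert (0 < R0 * (a - g * lc) / D). { apply Rdiv_lt_0_compat; nra. }
unfold rho. apply Rlt_div_r. nra. lra.
Qed.

Lemma z0_eq : z0 a D g lc = D / R0 * ln rho.
Proof. unfold z0. fold R0. rewrite ratio_eq. reflexivity. Qed.

Lemma z0_pos : 0 < z0 a D g lc.
Proof. rewrite z0_eq. pose proof rho_gt1. pose proof Rpos.
 apply Rmult_lt_0_compat. apply Rdiv_lt_0_compat; lra. rewrite <- ln_1. apply ln_increasing; lra. Qed.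

Lemma df_neg z : z < z0 a D g lc -> df a D g lc z < 0.
Proof.
intros hz. rewrite df_form. rewrite z0_eq in hz. pose proof Rpos. pose proof rho_gt1.
pose proof A_pos. pose proof (BB_pos a D g lc ha hD hg hlc). fold B in H2.
pose proof (lp_pos a D g ha hD hg). pose proof (lm_neg a D g ha hD hg). fold lp lm in H3, H4.
assert (R0 / D * z < ln rho).
{ apply Rmult_lt_reg_l with (D / R0). apply Rdiv_lt_0_compat; lra.
  replace (D / R0 * (R0 / D * z)) with z by (field; lra). exact hz. }
apply exp_increasing in H5. rewrite exp_ln in H5 by lra.
assert (B * - lm * exp (R0 / D * z) < A * lp).
{ unfold rho in H5. apply Rmult_lt_compat_l with (r := B * - lm) in H5; [|nra].
  replace (B * - lm * (A * lp / (B * - lm))) with (A * lp) in H5 by (field; lra). lra. }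
assert (0 < / R0 * exp (- lp * z)). { apply Rmult_lt_0_compat. apply Rinv_0_lt_compat; lra. apply exp_pos. }
nra.
Qed.

Lemma df_pos z : z0 a D g lc < z -> 0 < df a D g lc z.
Proof.
intros hz. rewrite df_form. rewrite z0_eq in hz. pose proof Rpos. pose proof rho_gt1.
pose proof A_pos. pose proof (BB_pos a D g lc ha hD hg hlc). fold B in H2.
pose proof (lp_pos a D g ha hD hg). pose proof (lm_neg a D g ha hD hg). fold lp lm in H3, H4.
assert (ln rho < R0 / D * z).
{ apply Rmult_lt_reg_l with (D / R0). apply Rdiv_lt_0_compat; lra.
  replace (D / R0 * (R0 / D * z)) with z by (field; lra). exact hz. }
apply exp_increasing in H5. rewrite exp_ln in H5 by lra.
assert (A * lp < B * - lm * exp (R0 / D * z)).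
{ unfold rho in H5. apply Rmult_lt_compat_l with (r := B * - lm) in H5; [|nra].
  replace (B * - lm * (A * lp / (B * - lm))) with (A * lp) in H5 by (field; lra). lra. }
assert (0 < / R0 * exp (- lp * z)). { apply Rmult_lt_0_compat. apply Rinv_0_lt_compat; lra. apply exp_pos. }
nra.
Qed.

Lemma f_dec x y : x < y -> y <= z0 a D g lc -> f y < f x.
Proof.
intros hxy hy. destruct (MVT_cor2 f (df a D g lc) x y hxy) as [c [Hc Hc2]].
intros c _. apply f_der. pose proof (df_neg c ltac:(lra)). nra.
Qed.

Lemma f_inc x y : x < y -> z0 a D g lc <= x -> f x < f y.
Proof.
intros hxy hx. destruct (MVT_cor2 f (df a D g lc) x y hxy) as [c [Hc Hc2]].
intros c _. apply f_der. pose proof (df_pos c ltac:(lra)). nra.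
Qed.

End I.

Section II.
Hypothesis hII : a <= g * lc.

Lemma df_pos2 z : 0 < z -> 0 < df a D g lc z.
Proof.
intros hz. unfold df. fold R0 lp lm A B. pose proof Rpos.
pose proof (BB_pos a D g lc ha hD hg hlc). fold B in H0.
pose proof (lp_pos a D g ha hD hg). pose proof (lm_neg a D g ha hD hg). fold lp lm in H1, H2.
pose proof (AB_lin a D g lc hD). fold A B lp lm R0 in H3.
assert (h1 : exp (- lp * z) < 1). { rewrite <- exp_0. apply exp_increasing. nra. }
assert (h2 : 1 < exp (- lm * z)). { rewrite <- exp_0. apply exp_increasing. nra. }
assert (h3 : 0 < exp (- lp * z)) by apply exp_pos.
assert (0 <= R0 * (a - g * lc) / D * -1).
{ replace (R0 * (a - g * lc) / D * -1) with (R0 * (g * lc - a) / D) by (field; lra).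
  apply Rmult_le_pos. apply Rmult_le_pos; lra. left; apply Rinv_0_lt_compat; lra. }
apply Rmult_lt_0_compat. apply Rinv_0_lt_compat; lra.
destruct (Rle_or_lt A 0).
- assert (0 <= A * - lp * exp (- lp * z)). { apply Rmult_le_pos; nra. }
  assert (0 < B * - lm * exp (- lm * z)). { apply Rmult_lt_0_compat; nra. }
  lra.
- assert (A * - lp < A * - lp * exp (- lp * z)). { assert (0 < A * lp) by nra. nra. }
  assert (B * - lm < B * - lm * exp (- lm * z)). { assert (0 < B * - lm) by nra. nra. }
  lra.
Qed.

Lemma f_inc2 x y : 0 <= x -> x < y -> f x < f y.
Proof.
intros hx hxy. destruct (MVT_cor2 f (df a D g lc) x y hxy) as [c [Hc Hc2]].
intros c _. apply f_der. pose proof (df_pos2 c ltac:(lra)). nra.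
Qed.

End II.

Lemma f_unbdd T M : 0 <= M -> exists Z, M <= Z /\ T < f Z.
Proof.
intros hM. pose proof Rpos.
pose proof (BB_pos a D g lc ha hD hg hlc). fold B in H0.
pose proof (lp_pos a D g ha hD hg). pose proof (lm_neg a D g ha hD hg). fold lp lm in H1, H2.
assert (hBm : 0 < B * - lm) by nra.
set (K := Rabs T * R0 + Rabs A + 1).
assert (hK : 0 < K). { unfold K. pose proof (Rabs_pos T). pose proof (Rabs_pos A). nra. }
set (Z := M + K / (B * - lm)).
assert (hKB : 0 < K / (B * - lm)) by (apply Rdiv_lt_0_compat; lra).
exists Z. split. unfold Z; lra.
rewrite f_form.
assert (e1 : 0 < exp (- lp * Z) <= 1). { split. apply exp_pos. rewrite <- exp_0. left. apply exp_increasing. unfold Z; nra. }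
assert (e2 : 1 + - lm * Z <= exp (- lm * Z)) by apply exp_ineq1_le.
assert (- Rabs A <= A * exp (- lp * Z)).
{ destruct (Rle_or_lt 0 A). rewrite Rabs_right by lra. nra. rewrite Rabs_left by lra. nra. }
assert (B * - lm * Z >= K).
{ unfold Z. replace (B * - lm * (M + K / (B * - lm))) with (B * - lm * M + K) by (field; lra). nra. }
assert (B * exp (- lm * Z) >= K) by nra.
assert (T * R0 <= Rabs T * R0). { apply Rmult_le_compat_r; [lra| apply Rle_abs]. }
apply Rmult_lt_reg_l with R0; auto. rewrite <- Rmult_assoc, Rinv_r, Rmult_1_l by lra.
unfold K in *. lra.
Qed.

End S.

Lemma ivt_f (f : R -> R) T x y : (forall z, continuity_pt f z) -> x <= y ->
  (f x - T) * (f y - T) <= 0 -> exists l, x <= l <= y /\ f l = T.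
Proof.
intros hc hxy hs.
destruct (IVT_cor (fun z => f z - T) x y) as [l [hl hf]]; auto.
intros z. apply continuity_pt_minus; auto. apply continuity_pt_const. intros u v; reflexivity.
exists l. split; auto. lra.
Qed.

Theorem theorem1 (a D g lc cinf cs : R)
  (ha : 0 < a) (hD : 0 < D) (hg : 0 < g) (hlc : 0 < lc) (hcinf : 0 < cinf)
  (hcs : 0 <= cs) :
  let f := f_ss a D g lc in
  let cst := c_star a D g lc cinf in
  let ss := steady_state a D g lc cinf cs in
  let z := z0 a D g lc in
  (g * lc < a ->
     0 < z /\
     (* (i) *)
     (cs / cinf < f z -> f z < 1 -> forall l c, ~ ss l c) /\
     (* (ii) *)
     (cs / cinf = f z ->
        ss z (cst z) /\
        (forall l c, ss l c -> same_sol a D g lc cinf z l c) /\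
        incr_on (cst z) (fun x => 0 <= x <= z)) /\
     (* (iii) *)
     (f z < cs / cinf -> cs / cinf < 1 ->
        exists l1 l2,
          0 < l1 < z /\ z < l2 /\
          ss l1 (cst l1) /\ ss l2 (cst l2) /\
          (forall l c, ss l c ->
             same_sol a D g lc cinf l1 l c \/ same_sol a D g lc cinf l2 l c) /\
          incr_on (cst l1) (fun x => 0 <= x <= l1) /\
          decr_on (cst l2) (fun x => 0 <= x <= l2 - z) /\
          incr_on (cst l2) (fun x => l2 - z <= x <= l2)) /\
     (* (iv) *)
     (1 <= cs / cinf ->
        exists l,
          z < l /\ ss l (cst l) /\
          (forall l' c, ss l' c -> same_sol a D g lc cinf l l' c) /\
          decr_on (cst l) (fun x => 0 < x <= l - z) /\
          incr_on (cst l) (fun x => l - z <= x <= l))) /\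
  (a <= g * lc ->
     ((exists l c, ss l c) <-> cinf < cs) /\
     (cinf < cs ->
        exists l,
          0 < l /\ f l = cs / cinf /\
          (forall l', 0 < l' -> f l' = cs / cinf -> l' = l) /\
          ss l (cst l) /\
          (forall l' c, ss l' c -> same_sol a D g lc cinf l l' c) /\
          decr_on (cst l) (fun x => 0 <= x <= l))).
Proof.
intros f cst ss z.
pose proof (ss_uniq a D g lc cinf cs ha hD hg hcinf) as U.
pose proof (ss_exist a D g lc cinf cs ha hD hg hcinf) as E.
fold f ss cst in U, E.
assert (f0 : f 0 = 1) by (apply f_0; auto).
assert (fc : forall t, continuity_pt f t) by (intros; apply f_cont).
assert (ceq : forall l x, cst l x = cinf * f (l - x)) by (intros; apply cst_eq).
set (T := cs / cinf) in *.
split.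
- intros hI.
  pose proof (z0_pos a D g lc ha hD hg hlc hI) as hz. fold z in hz.
  pose proof (f_dec a D g lc ha hD hg hlc hI) as fd. pose proof (f_inc a D g lc ha hD hg hlc hI) as fi.
  fold f z in fd, fi.
  assert (fz1 : f z < 1) by (rewrite <- f0; apply fd; lra).
  assert (fmin : forall l, f z <= f l).
  { intros l. destruct (Rtotal_order l z) as [h|[h|h]].
    left; apply fd; lra. subst; lra. left; apply fi; lra. }
  assert (injl : forall x y, x <= z -> y <= z -> f x = f y -> x = y).
  { intros x y hx hy hf. destruct (Rtotal_order x y) as [h|[h|h]]; auto.
    pose proof (fd x y h hy); lra. pose proof (fd y x h hx); lra. }
  assert (injr : forall x y, z <= x -> z <= y -> f x = f y -> x = y).
  { intros x y hx hy hf. destruct (Rtotal_order x y) as [h|[h|h]]; auto.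
    pose proof (fi x y h hx); lra. pose proof (fi y x h hy); lra. }
  split; [exact hz|]. split; [|split; [|split]].
  + intros h1 h2 l c H. apply U in H. destruct H as [_ [hf _]]. pose proof (fmin l). lra.
  + intros h. split; [apply E; auto|]. split.
    * intros l c H. apply U in H. destruct H as [hl [hf hc]].
      assert (l = z).
      { destruct (Rle_or_lt l z) as [h'|h']. apply injl; lra.
        pose proof (fi z l h' ltac:(lra)). lra. }
      subst l. split; auto.
    * intros x y hx hy hxy. rewrite !ceq. apply Rmult_lt_compat_l; auto. apply fd; lra.
  + intros h1 h2.
    destruct (ivt_f f T 0 z fc ltac:(lra)) as [l1 [hl1 hf1]]. rewrite f0. nra.
    destruct (f_unbdd a D g lc ha hD hg hlc T z ltac:(lra)) as [Z [hZ hfZ]]. fold f in hfZ.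
    destruct (ivt_f f T z Z fc hZ) as [l2 [hl2 hf2]]. nra.
    assert (n1 : l1 <> 0) by (intro Hq; rewrite Hq in *; lra). assert (n2 : l1 <> z) by (intro Hq; rewrite Hq in *; lra).
    assert (n3 : l2 <> z) by (intro Hq; rewrite Hq in *; lra).
    exists l1, l2. split; [lra|]. split; [lra|]. split; [apply E; auto; lra|].
    split; [apply E; auto; lra|]. split; [|split; [|split]].
    * intros l c H. apply U in H. destruct H as [hl [hf hc]].
      destruct (Rle_or_lt l z) as [h'|h'].
      left. assert (l = l1) by (apply injl; lra). subst l; split; auto.
      right. assert (l = l2) by (apply injr; lra). subst l; split; auto.
    * intros x y hx hy hxy. rewrite !ceq. apply Rmult_lt_compat_l; auto. apply fd; lra.
    * intros x y hx hy hxy. rewrite !ceq. apply Rmult_lt_compat_l; auto. apply fi; lra.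
    * intros x y hx hy hxy. rewrite !ceq. apply Rmult_lt_compat_l; auto. apply fd; lra.
  + intros h.
    destruct (f_unbdd a D g lc ha hD hg hlc T z ltac:(lra)) as [Z [hZ hfZ]]. fold f in hfZ.
    destruct (ivt_f f T z Z fc hZ) as [l [hl hf]]. nra.
    assert (n1 : l <> z) by (intro Hq; rewrite Hq in *; lra).
    exists l. split; [lra|]. split; [apply E; auto; lra|]. split; [|split].
    * intros l' c H. apply U in H. destruct H as [hl' [hf' hc]].
      destruct (Rle_or_lt l' z) as [h'|h'].
      exfalso. pose proof (fd 0 l' hl' h'). lra.
      assert (l' = l) by (apply injr; lra). subst l'; split; auto.
    * intros x y hx hy hxy. rewrite !ceq. apply Rmult_lt_compat_l; auto. apply fi; lra.
    * intros x y hx hy hxy. rewrite !ceq. apply Rmult_lt_compat_l; auto. apply fd; lra.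
- intros hII.
  pose proof (f_inc2 a D g lc ha hD hg hlc hII) as fi. fold f in fi.
  assert (Teq : T * cinf = cs) by (unfold T; field; lra).
  assert (exist : cinf < cs -> exists l,
          0 < l /\ f l = T /\
          (forall l', 0 < l' -> f l' = T -> l' = l) /\
          ss l (cst l) /\
          (forall l' c, ss l' c -> same_sol a D g lc cinf l l' c) /\
          decr_on (cst l) (fun x => 0 <= x <= l)).
  { intros hc. assert (hT : 1 < T) by nra.
    destruct (f_unbdd a D g lc ha hD hg hlc T 0 ltac:(lra)) as [Z [hZ hfZ]]. fold f in hfZ.
    destruct (ivt_f f T 0 Z fc hZ) as [l [hl hf]]. nra.
    assert (n1 : l <> 0) by (intro Hq; rewrite Hq in *; lra).
    assert (inj : forall l', 0 < l' -> f l' = T -> l' = l).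
    { intros l' hl' hf'. destruct (Rtotal_order l' l) as [h|[h|h]]; auto.
      pose proof (fi l' l ltac:(lra) h); lra. pose proof (fi l l' ltac:(lra) h); lra. }
    exists l. split; [lra|]. split; auto. split; auto. split; [apply E; auto; lra|]. split.
    * intros l' c H. apply U in H. destruct H as [hl' [hf' hc']].
      assert (l' = l) by auto. subst l'; split; auto.
    * intros x y hx hy hxy. rewrite !ceq. apply Rmult_lt_compat_l; auto. apply fi; lra. }
  split; auto. split.
  + intros [l [c H]]. apply U in H. destruct H as [hl [hf _]]. pose proof (fi 0 l ltac:(lra) hl). nra.
  + intros hc. destruct (exist hc) as [l [h1 [h2 [h3 [h4 h5]]]]]. exists l, (cst l); auto.
Qed.
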